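(* Let $X=\{x_1,\dots,x_n\}\subseteq\mathbb{R}^d$ be a finite set of base points, let $\delta(\cdot,\cdot)$ be the distance function, and let $G=(V,E)$ be a directed graph index whose vertex set $V$ is identified with $X$. Let $q\in\mathbb{R}^d$ be a query and, for $1\le i\le n$, let $N_{i,q}$ denote the $i$-th nearest neighbour of $q$ in $X$ (so $\delta(N_{1,q},q)\le\delta(N_{2,q},q)\le\cdots$). Let $S\ge 1$ and $1\le i,j\le S$. If $N_{i,q}$ can reach $N_{j,q}$ (via a directed path) in the $S$-Neighboring Graph $NG_{S,q}$, then the Greedy Search algorithm run with query $q$, entry point $ep=N_{i,q}$ and search list size $L\ge S$ (and any result size $k\le L$) always visits (marks as visited) $N_{j,q}$.
   Context: $S$-Neighboring Graph: for a directed graph $G=(V,E)$ and query $q$, let $V_{S,q}=\{N_{1,q},\dots,N_{S,q}\}$; then $NG_{S,q}=(V_{S,q},E_{S,q})$ is the subgraph of $G$ induced by $V_{S,q}$. $Neighbors(G,u)$ denotes the set of out-neighbours of $u$ in $G$. Greedy Search (input: graph $G$, query $q$, result size $k$, entry point $ep$, search list size $L\ge k$): initialize a candidate set $C\leftarrow\{ep\}$ and a result set $R\leftarrow\{ep\}$, and mark $ep$ as visited. While $C\neq\emptyset$: pop from $C$ an element $u$ minimizing $\delta(u,q)$; set $d_{max}\leftarrow\max_{x\in R}\delta(x,q)$ (or $+\infty$ if $R=\emptyset$); if $\delta(u,q)>d_{max}$, stop the loop. Otherwise, for each $v\in Neighbors(G,u)$ that has not been visited: mark $v$ as visited; if $\delta(v,q)<d_{max}$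 or $|R|<L$, add $v$ to both $R$ and $C$; while $|R|>L$, remove from $R$ an element $x$ maximizing $\delta(x,q)$; then update $d_{max}\leftarrow\max_{x\in R}\delta(x,q)$. Finally return the $k$ points of $R$ closest to $q$. (Removing an element from $R$ does not remove it from $C$.) *)

(* Defs.v *)
From HB Require Import structures.
From mathcomp Require Import all_boot all_order all_algebra.
Set Implicit Arguments. Unset Strict Implicit. Unset Printing Implicit Defensive.
Import Order.TTheory GRing.Theory Num.Theory.
Local Open Scope ring_scope.

(* The graph index G = (V, E) is given by adjacency lists [nbrs : V -> seq V]:
   Neighbors(G,u) = the elements of [nbrs u]; the list order is the (arbitrary)
   order in which the for-loop of Greedy Search iterates over Neighbors(G,u).
   [dq v] is delta(v, q). *)

Section Greedy.
Variables (R : realFieldType) (V : finType) (dq : V -> R) (nbrs : V -> seq V) (L : nat).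

Definition argmin_in (A : {set V}) : option V :=
  [pick x in A | [forall y in A, dq x <= dq y]].
Definition argmax_in (A : {set V}) : option V :=
  [pick x in A | [forall y in A, dq y <= dq x]].

(* d_max = max_{x in A} delta(x,q); None encodes +infinity (A empty) *)
Definition dmax (A : {set V}) : option R := omap dq (argmax_in A).
Definition lt_opt (x : R) (m : option R) : bool :=
  if m is Some m' then x < m' else true.
Definition gt_opt (x : R) (m : option R) : bool :=
  if m is Some m' then m' < x else false.

(* "while |R| > L, remove from R an element maximizing delta(x,q)";
   #|V| iterations suffice since each removal decreases |R|. *)
Definition trim (A : {set V}) : {set V} :=
  iter #|V| (fun B : {set V} => if (L < #|B|)%N then
                        (if argmax_in B is Some x then B :\ x else B)
                      else B) A.

Record state := St { cand : {set V}; res : {set V}; visited : {set V} }.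

Definition process_nbr (s : state) (v : V) : state :=
  if v \in visited s then s else
  let vis := v |: visited s in
  if lt_opt (dq v) (dmax (res s)) || (#|res s| < L)%N then
    St (v |: cand s) (trim (v |: res s)) vis
  else St (cand s) (res s) vis.

Fixpoint gs_loop (fuel : nat) (s : state) : state :=
  match fuel with
  | 0 => s
  | f.+1 =>
    match argmin_in (cand s) with
    | None => s
    | Some u =>
      let s1 := St (cand s :\ u) (res s) (visited s) in
      if gt_opt (dq u) (dmax (res s)) then s1
      else gs_loop f (foldl process_nbr s1 (nbrs u))
    end
  end.

(* Greedy Search from entry point ep; the loop runs at most #|V| iterations
   (each vertex enters C at most once), so fuel #|V|.+1 never runs out. *)
Definition greedy_search (ep : V) : state :=
  gs_loop #|V|.+1 (St [set ep] [set ep] [set ep]).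

End Greedy.

(* V_{S,q} = {N_1, ..., N_S} (0-based indices a < S) *)
Definition VS (V : finType) (n : nat) (N : 'I_n -> V) (S : nat) : {set V} :=
  [set N a | a : 'I_n & (a < S)%N].

Definition NG_rel (V : finType) (nbrs : V -> seq V) (A : {set V}) : rel V :=
  [rel u v | [&& u \in A, v \in A & v \in nbrs u]].

(* Main.v *)
Require Import Defs.
From HB Require Import structures.
From mathcomp Require Import all_boot all_order all_algebra.
From mathcomp Require Import zify.
Import Order.TTheory GRing.Theory Num.Theory.
Local Open Scope ring_scope.

Section Proof.
Variables (R : realFieldType) (V : finType) (dq : V -> R) (nbrs : V -> seq V) (L : nat).
Variable (A : {set V}).
Hypothesis HA : forall x y, x \in A -> y \notin A -> dq x < dq y.
Hypothesis cardA : (#|A| <= L)%N.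
Set Implicit Arguments. Unset Strict Implicit.

Lemma seq_min (s : seq V) : s != [::] ->
  exists2 x, x \in s & forall y, y \in s -> dq x <= dq y.
Proof.
elim: s => // a t IH _.
case: t IH => [|b t] IH.
  by exists a => [|y]; rewrite ?mem_seq1 // => /eqP ->.
have [x xin xm] := IH isT.
case: (leP (dq a) (dq x)) => h.
  exists a; first by rewrite mem_head.
  move=> y; rewrite in_cons => /orP [/eqP ->//|/xm]; exact: le_trans.
exists x; first by rewrite in_cons xin orbT.
move=> y; rewrite in_cons => /orP [/eqP ->|/xm //]; exact: ltW.
Qed.

Lemma seq_max (s : seq V) : s != [::] ->
  exists2 x, x \in s & forall y, y \in s -> dq y <= dq x.
Proof.
elim: s => // a t IH _.
case: t IH => [|b t] IH.
  by exists a => [|y]; rewrite ?mem_seq1 // => /eqP ->.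
have [x xin xm] := IH isT.
case: (leP (dq a) (dq x)) => h.
  exists x; first by rewrite in_cons xin orbT.
  move=> y; rewrite in_cons => /orP [/eqP ->//|/xm //].
exists a; first by rewrite mem_head.
move=> y; rewrite in_cons => /orP [/eqP ->//|/xm h2]; exact: le_trans h2 (ltW h).
Qed.

Lemma argmin_some (B : {set V}) u : argmin_in dq B = Some u ->
  u \in B /\ forall y, y \in B -> dq u <= dq y.
Proof.
rewrite /argmin_in; case: pickP => // x /andP [xB /forall_inP h] [<-].
by split => // y /h.
Qed.

Lemma argmin_none (B : {set V}) : argmin_in dq B = None -> B = set0.
Proof.
rewrite /argmin_in; case: pickP => // h _.
apply/setP => y; rewrite inE; apply/negP => yB.
have ne : enum B != [::] by apply/eqP => e; move: (mem_enum B y); rewrite e yB.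
have [x xin xm] := @seq_min (enum B) ne.
move: (h x); rewrite -(mem_enum B) xin /=; move/negP; apply.
by apply/forall_inP => z zB; apply: xm; rewrite mem_enum.
Qed.

Lemma dmax_ge (B : {set V}) w : w \in B ->
  exists m, dmax dq B = Some (dq m) /\ m \in B /\ forall y, y \in B -> dq y <= dq m.
Proof.
move=> wB; rewrite /dmax /argmax_in; case: pickP.
  move=> x /andP [xB /forall_inP h]; exists x; split => //; split => // y /h //.
move=> h.
have ne : enum B != [::] by apply/eqP => e; move: (mem_enum B w); rewrite e wB.
have [x xin xm] := @seq_max (enum B) ne.
move: (h x); rewrite -(mem_enum B) xin /=; move/negP => C; exfalso; apply: C.
by apply/forall_inP => z zB; apply: xm; rewrite mem_enum.
Qed.

Definition tstep (B : {set V}) : {set V} :=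
  if (L < #|B|)%N then (if argmax_in dq B is Some x then B :\ x else B) else B.

Lemma tstep_ok B : tstep B \subset B /\ forall w, w \in A -> w \in B -> w \in tstep B.
Proof.
rewrite /tstep; case: ifP => hL; last by split.
rewrite /argmax_in; case: pickP => [x /andP [xB /forall_inP h]|_]; last by split.
have xA : x \notin A.
  apply/negP => xA.
  have sub : B \subset A.
    apply/subsetP => y yB; apply/negPn/negP => yA.
    by have := HA x y xA yA; rewrite ltNge h.
  by have := subset_leq_card sub; lia.
split; first exact: subD1set.
move=> w wA wB; rewrite in_setD1 wB andbT; apply/eqP => e; subst w.
by rewrite wA in xA.
Qed.

Lemma trim_ok B : trim dq L B \subset B /\ forall w, w \in A -> w \in B -> w \in trim dq L B.
Proof.
rewrite /trim; elim: #|V| => [|k [IH1 IH2]] /=; first by split.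
have [h1 h2] := tstep_ok (iter k tstep B).
split; first exact: subset_trans h1 IH1.
by move=> w wA wB; apply: h2 => //; apply: IH2.
Qed.

Definition Binv (s : state V) :=
  res s \subset visited s /\ forall w, w \in A -> w \in cand s -> w \in res s.

Definition I3 (ex : pred V) (s : state V) :=
  forall w, w \in A -> w \in visited s ->
    ex w || (w \in cand s) || all (fun y => y \in visited s) (nbrs w).

Definition cnt (s : state V) := (#|cand s| + #|~: visited s|)%N.

Lemma key (s : state V) v : Binv s -> v \in A -> v \notin visited s ->
  lt_opt (dq v) (dmax dq (res s)) || (#|res s| < L)%N.
Proof.
move=> [B1 B2] vA vV.
case: ltnP => hL; first by rewrite orbT.
have [y yR yA] : exists2 y, y \in res s & y \notin A.
  case: (boolP [exists y in res s, y \notin A]) => [/exists_inP //|/exists_inPn h].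
  exfalso.
  have sub : res s \subset A :\ v.
    apply/subsetP => y yR; rewrite in_setD1 (negPn (h y yR)) andbT.
    apply/eqP => e; subst y; by rewrite (subsetP B1 _ yR) in vV.
  have := subset_leq_card sub; have := cardsD1 v A; rewrite vA; lia.
have [m [-> [_ mm]]] := dmax_ge yR.
by rewrite /= (lt_le_trans (HA v y vA yA) (mm _ yR)).
Qed.

Lemma pn_ok ex s v : Binv s -> I3 ex s ->
  [/\ Binv (process_nbr dq L s v), I3 ex (process_nbr dq L s v),
      visited s \subset visited (process_nbr dq L s v),
      v \in visited (process_nbr dq L s v) &
      (cnt (process_nbr dq L s v) <= cnt s)%N].
Proof.
move=> Bs Is; rewrite /process_nbr.
case: ifP => vV; first by split.
have cntV : (#|~: (v |: visited s)| + 1 = #|~: visited s|)%N.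
  have := cardsC (v |: visited s); have := cardsC (visited s).
  rewrite cardsU1 vV; lia.
have Bs' := Bs; case: Bs' => [B1 B2].
case: ifP => hc /=.
- split.
  + have [t1 t2] := trim_ok (v |: res s); split => /=.
      apply: subset_trans t1 _; exact: setUS.
    move=> w wA; rewrite in_setU1 => /orP [/eqP e|wc]; apply: t2 => //.
      by rewrite in_setU1 e eqxx.
    by rewrite in_setU1 B2 ?orbT.
  + move=> w wA /=; rewrite in_setU1 => /orP [/eqP e|wv].
      by rewrite in_setU1 e eqxx orbT.
    move: (Is w wA wv) => /orP [/orP [h|h]|h].
    * by rewrite h.
    * by rewrite in_setU1 h !orbT.
    * apply/orP; right; apply/allP => y /(allP h) yv; by rewrite in_setU1 yv orbT.
  + exact: subsetUr.
  + by rewrite in_setU1 eqxx.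
  + rewrite /cnt /= cardsU1; lia.
- split.
  + split => //=; apply: subset_trans B1 _; exact: subsetUr.
  + move=> w wA /=; rewrite in_setU1 => /orP [/eqP e|wv].
      subst w; by rewrite (key Bs wA) ?vV in hc.
    move: (Is w wA wv) => /orP [->//|h]; apply/orP; right.
    apply/allP => y /(allP h) yv; by rewrite in_setU1 yv orbT.
  + exact: subsetUr.
  + by rewrite in_setU1 eqxx.
  + rewrite /cnt /=; lia.
Qed.

Lemma fold_ok ex l s : Binv s -> I3 ex s ->
  [/\ Binv (foldl (process_nbr dq L) s l), I3 ex (foldl (process_nbr dq L) s l),
      visited s \subset visited (foldl (process_nbr dq L) s l),
      all (fun y => y \in visited (foldl (process_nbr dq L) s l)) l &
      (cnt (foldl (process_nbr dq L) s l) <= cnt s)%N].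
Proof.
elim: l s => [|v l IH] s Bs Is /=; first by split.
have [B' I' sub vin c] := pn_ok v Bs Is.
have [B'' I'' sub' al c'] := IH _ B' I'.
split => //.
- exact: subset_trans sub sub'.
- by rewrite (subsetP sub' _ vin).
- exact: leq_trans c' c.
Qed.

Definition closed (s : state V) :=
  forall w, w \in A -> w \in visited s -> all (fun y => y \in visited s) (nbrs w).

Lemma loop_ok f s : Binv s -> I3 pred0 s -> (cnt s < f)%N ->
  visited s \subset visited (gs_loop dq nbrs L f s) /\ closed (gs_loop dq nbrs L f s).
Proof.
elim: f s => [|f IH] s Bs Is hc //=.
case e: (argmin_in dq (cand s)) => [u|]; last first.
  split => // w wA wv; have := Is w wA wv; by rewrite (argmin_none e) in_set0 /=.
have [uC um] := argmin_some e.
have Bs' := Bs; case: Bs' => [B1 B2].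
case: ifP => hg.
  split => //= w wA wv; move: (Is w wA wv) => /orP [/orP [//|wc]|//].
  have wR := B2 _ wA wc.
  have [m [em [_ mm]]] := dmax_ge wR.
  move: hg; rewrite em /= => hg.
  by have := le_lt_trans (le_trans (um _ wc) (mm _ wR)) hg; rewrite ltxx.
set s1 := St _ _ _.
have Bs1 : Binv s1 by split => //= w wA; rewrite in_setD1 => /andP [_ /B2]; apply.
have Is1 : I3 (pred1 u) s1.
  move=> w wA /= wv; move: (Is w wA wv) => /orP [/orP [//|wc]|->]; last by rewrite orbT.
  rewrite in_setD1 wc andbT; by case: (w == u).
have [B2' I2' sub al c] := fold_ok (nbrs u) Bs1 Is1.
have Is2 : I3 pred0 (foldl (process_nbr dq L) s1 (nbrs u)).
  move=> w wA wv; move: (I2' w wA wv) => /orP [/orP [/eqP e2|h]|h].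
  - by rewrite e2 al orbT.
  - by rewrite h orbT.
  - by rewrite h orbT.
have c1 : (cnt s1 < cnt s)%N.
  rewrite /cnt /= (cardsD1 u (cand s)) uC; lia.
have [sub2 cl] := IH _ B2' Is2 (leq_trans (leq_ltn_trans c c1) hc).
split => //; exact: subset_trans sub sub2.
Qed.

Lemma closed_reach (W : {set V}) :
  (forall w, w \in A -> w \in W -> all (fun y => y \in W) (nbrs w)) ->
  forall p x, x \in A -> x \in W -> path (NG_rel nbrs A) x p -> last x p \in W.
Proof.
move=> cl; elim=> [|y p IH] x xA xW //=.
case/andP => /= /and3P [_ yA yn] pth.
apply: IH => //; exact: (allP (cl x xA xW)).
Qed.

Lemma greedy_ok ep t : ep \in A -> connect (NG_rel nbrs A) ep t ->
  t \in visited (greedy_search dq nbrs L ep).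
Proof.
move=> epA hcon.
set s0 := St [set ep] [set ep] [set ep].
have B0 : Binv s0 by split => //= w _; rewrite inE.
have I0 : I3 pred0 s0 by move=> w wA /=; rewrite inE => ->.
have c0 : (cnt s0 < #|V|.+1)%N.
  rewrite /cnt /=; have := cardsC [set ep]; rewrite cards1; by move=> ->.
have [sub cl] := loop_ok B0 I0 c0.
rewrite /greedy_search -/s0.
have epv : ep \in visited (gs_loop dq nbrs L #|V|.+1 s0).
  by apply: (subsetP sub); rewrite inE.
case/connectP: hcon => p pth ->.
exact: (@closed_reach _ cl p ep epA epv pth).
Qed.

End Proof.

Theorem theorem4p2 (R : realFieldType) (d n : nat)
  (delta : 'rV[R]_d -> 'rV[R]_d -> R)
  (V : finType) (x : V -> 'rV[R]_d) (nbrs : V -> seq V) (q : 'rV[R]_d)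
  (N : 'I_n -> V) (S k L : nat) (i j : 'I_n) :
  injective x ->
  injective (fun v => delta (x v) q) ->
  bijective N ->
  (forall a b : 'I_n, (a <= b)%N -> delta (x (N a)) q <= delta (x (N b)) q) ->
  (1 <= S <= n)%N -> (i < S)%N -> (j < S)%N ->
  (S <= L)%N -> (1 <= k <= L)%N ->
  connect (NG_rel nbrs (VS N S)) (N i) (N j) ->
  N j \in visited (greedy_search (fun v => delta (x v) q) nbrs L (N i)).
Proof.
move=> _ dinj [g Ng gN] mono /andP [S1 Sn] iS jS SL _ hcon.
apply: greedy_ok hcon; last first.
  by apply/imsetP; exists i; rewrite ?inE.
- have sub : VS N S \subset [set N (widen_ord Sn b) | b : 'I_S].
    apply/subsetP => y /imsetP [a]; rewrite inE => aS ->.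
    apply/imsetP; exists (Ordinal aS) => //; congr N; exact: val_inj.
  have := subset_leq_card sub; have := leq_imset_card (fun b : 'I_S => N (widen_ord Sn b)) 'I_S.
  rewrite card_ord => h1 h2; exact: leq_trans h2 (leq_trans h1 SL).
- move=> u y /imsetP [a]; rewrite inE => aS -> yA.
  have gyS : (S <= g y)%N.
    rewrite leqNgt; apply/negP => h; move: yA; rewrite -(gN y).
    by move/negP; apply; apply/imsetP; exists (g y); rewrite ?inE.
  have le1 := mono a (g y) (ltnW (leq_trans aS gyS)).
  rewrite gN in le1; rewrite lt_neqAle le1 andbT; apply/eqP => e.
  have := dinj _ _ e => ey; move: yA; rewrite -ey; move/negP; apply.
  by apply/imsetP; exists a; rewrite ?inE.
Qed.
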